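(* Let $K\subset S^3$ be a knot with Alexander module $H$. Let $k_1,k_2\geq1$ be coprime integers and let $\chi_i\colon H\to\mathbb C^*$ ($i=1,2$) be characters such that $\chi_i$ factors through $H/(t^{k_i}-1)H$. Then there is an isomorphism of representations of $\pi_K$ \[\alpha_{(k_1,\chi_1)}\otimes\alpha_{(k_2,\chi_2)}\cong \alpha_{(k_1k_2,\chi_1\chi_2)},\] where $\chi_1\chi_2$ denotes the pointwise product character (which factors through $H/(t^{k_1k_2}-1)H$).
   Context: For a knot $K$, $X_K=S^3\setminus\nu K$, $\pi_K=\pi_1(X_K)$, and $H=H_1(X_K;\mathbb Z[t^{\pm1}])$ is the Alexander module (the homology of the infinite cyclic cover, with $t$ acting by deck transformation). Then $\pi_K/\pi_K^{(2)}\cong\mathbb Z\ltimes H$, where $n\in\mathbb Z$ acts on $H$ by multiplication by $t^n$ (the generator of $\mathbb Z$ corresponding to a meridian). For $n\ge1$, a character $\chi\colon H\to\mathbb C^*$ factoring through $H/(t^n-1)H$, and $z\in\mathbb C$ with $z^n=(-1)^{n+1}$, define $\alpha_{(n,\chi)}\colon \mathbb Z\ltimes H\to \mathrm{SL}(n,\mathbb C)$ by \[\alpha_{(n,\chi)}(j,h)=P^j\cdot\mathrm{diag}\big(\chi(h),\chi(th),\dots,\chi(t^{n-1}h)\big),\] where $P$ is the $n\times n$ matrix with entries $z$ in positions $(1,n),(2,1),(3,2),\dots,(n,n-1)$ and $0$ elsewhere; its isomorphism type does not depend on the choice of $z$. It is regarded as a representation of $\pi_K$ via $\pi_K\to\pi_K/\pi_K^{(2)}\cong\mathbb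 Z\ltimes H$. *)

(* Defs.v *)
From HB Require Import structures.
From mathcomp Require Import all_boot all_order all_algebra.
Set Implicit Arguments. Unset Strict Implicit. Unset Printing Implicit Defensive.
Import Order.TTheory GRing.Theory Num.Theory.
Local Open Scope ring_scope.

(* A Z[t^{+-1}]-module H is modelled as an abelian group H (zmodType) together
   with an additive automorphism t (additive map with a two-sided inverse). *)
Definition laurent_module (H : zmodType) (t tinv : H -> H) : Prop :=
  [/\ forall a b, t (a + b) = t a + t b, cancel t tinv & cancel tinv t].

Definition tpow (H : Type) (t : H -> H) (i : nat) (h : H) : H := iter i t h.

Definition is_character (H : zmodType) (C : fieldType) (chi : H -> C) : Prop :=
  (forall a b, chi (a + b) = chi a * chi b) /\ (forall a, chi a != 0).

(* chi factors through H/(t^n - 1)H, i.e. chi is trivial on (t^n - 1)H *)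
Definition factors_through (H : zmodType) (C : fieldType) (t : H -> H)
    (n : nat) (chi : H -> C) : Prop :=
  forall h, chi (tpow t n h - h) = 1.

(* the n x n matrix P with z at positions (1,n),(2,1),...,(n,n-1) (1-indexed);
   0-indexed: entry (i,j) is z iff i = (j+1) mod n. *)
Definition Pmx (C : fieldType) (n : nat) (z : C) : 'M[C]_n :=
  \matrix_(i, j) (if (i : nat) == ((j : nat).+1 %% n)%N then z else 0).

Definition mxpowz (C : fieldType) (n : nat) (A : 'M[C]_n) (j : int) : 'M[C]_n :=
  match j with
  | Posz k => iter k (mulmx A) 1%:M
  | Negz k => iter k.+1 (mulmx (invmx A)) 1%:M
  end.

(* alpha_{(n,chi)} (j,h) = P^j diag(chi(h), chi(th), ..., chi(t^{n-1}h)),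
   as a function on Z x| H = pi_K / pi_K^(2) (pairs (j,h)). *)
Definition alpha (H : zmodType) (C : fieldType) (t : H -> H) (n : nat)
    (chi : H -> C) (z : C) (g : int * H) : 'M[C]_n :=
  mxpowz (Pmx n z) g.1 *m diag_mx (\row_(i < n) chi (tpow t i g.2)).
Arguments alpha {H C} t n chi z g.

(* Kronecker (tensor) product of matrices; basis e_i (x) f_j indexed via the
   standard bijection 'I_(m1*m2) <-> 'I_m1 * 'I_m2 used by mxvec. *)
Definition kronmx (C : fieldType) (m1 n1 m2 n2 : nat)
    (A : 'M[C]_(m1, n1)) (B : 'M[C]_(m2, n2)) : 'M[C]_(m1 * m2, n1 * n2) :=
  \matrix_(k, l)
    (let ki := enum_val (cast_ord (esym (mxvec_cast m1 m2)) k) in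
     let lj := enum_val (cast_ord (esym (mxvec_cast n1 n2)) l) in
     A ki.1 lj.1 * B ki.2 lj.2).

Definition rep_iso (G : Type) (C : fieldType) (n : nat)
    (rho1 rho2 : G -> 'M[C]_n) : Prop :=
  exists2 A : 'M[C]_n, A \in unitmx & forall g, A *m rho1 g = rho2 g *m A.

(* Main.v *)
Require Import Defs.
From HB Require Import structures.
From mathcomp Require Import all_boot all_order all_fingroup all_algebra.
Import Order.TTheory GRing.Theory Num.Theory.
Local Open Scope ring_scope.

Definition fk (m n : nat) (k : 'I_(m * n)) : 'I_m * 'I_n :=
  enum_val (cast_ord (esym (mxvec_cast m n)) k).
Definition gk (m n : nat) (p : 'I_m * 'I_n) : 'I_(m * n) :=
  cast_ord (mxvec_cast m n) (enum_rank p).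

Arguments fk {m n}.
Arguments gk {m n}.

Lemma fkK m n : cancel (@fk m n) (@gk m n).
Proof. by move=> k; rewrite /fk /gk enum_valK cast_ordKV. Qed.
Lemma gkK m n : cancel (@gk m n) (@fk m n).
Proof. by move=> p; rewrite /fk /gk cast_ordK enum_rankK. Qed.

Section Kron.
Variable C : fieldType.

Lemma kronE m1 n1 m2 n2 (A : 'M[C]_(m1,n1)) (B : 'M[C]_(m2,n2)) k l :
  kronmx A B k l = A (fk k).1 (fk l).1 * B (fk k).2 (fk l).2.
Proof. by rewrite /kronmx mxE. Qed.

Lemma kron_mul m1 n1 p1 m2 n2 p2 (A : 'M[C]_(m1,n1)) (B : 'M[C]_(n1,p1))
  (A2 : 'M[C]_(m2,n2)) (B2 : 'M[C]_(n2,p2)) :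
  kronmx (A *m B) (A2 *m B2) = kronmx A A2 *m kronmx B B2.
Proof.
apply/matrixP => k l; rewrite kronE !mxE big_distrlr /= pair_bigA /=.
rewrite (reindex (@fk n1 n2) (onW_bij _ (Bijective (@fkK n1 n2) (@gkK n1 n2)))) /=.
by apply: eq_bigr => x _; rewrite !kronE mulrACA.
Qed.

Lemma kron1 m n : kronmx (1%:M : 'M[C]_m) (1%:M : 'M[C]_n) = 1%:M.
Proof.
apply/matrixP => k l; rewrite kronE !mxE -natrM mulnb.
have -> : (k == l) = (fk k == fk l) by rewrite (can_eq (@fkK m n)).
by case: (fk k) (fk l) => [a b] [c d].
Qed.

Lemma kron_diag m n (d1 : 'rV[C]_m) (d2 : 'rV[C]_n) :
  kronmx (diag_mx d1) (diag_mx d2) =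
  diag_mx (\row_k (d1 0 (fk k).1 * d2 0 (fk k).2)).
Proof.
apply/matrixP => k l; rewrite kronE !mxE.
have -> : (k == l) = (fk k == fk l) by rewrite (can_eq (@fkK m n)).
case: (fk k) (fk l) => [a b] [c e] /=; rewrite xpair_eqE.
case: eqP => [->|_]; case: eqP => [->|_] //=;
  by rewrite ?mulr0n ?mul0r ?mulr0 ?mulr1n.
Qed.

Lemma kron_iter m n (A : 'M[C]_m) (B : 'M[C]_n) k :
  kronmx (iter k (mulmx A) 1%:M) (iter k (mulmx B) 1%:M)
  = iter k (mulmx (kronmx A B)) 1%:M.
Proof. elim: k => [|k IH] /=; first exact: kron1. by rewrite kron_mul IH. Qed.

Lemma iter_inter n (A X Y : 'M[C]_n) k : A *m X = Y *m A ->
  A *m iter k (mulmx X) 1%:M = iter k (mulmx Y) 1%:M *m A.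
Proof.
move=> e; elim: k => [|k IH] /=; first by rewrite mulmx1 mul1mx.
by rewrite mulmxA e -mulmxA IH mulmxA.
Qed.

Definition sS n := perm (@ordS_inj n).

Lemma PmxE n (z : C) : Pmx n z = z *: (perm_mx (sS n))^T.
Proof.
apply/matrixP => i j; rewrite /Pmx /perm_mx !mxE /sS permE.
have -> : (ordS j == i) = (i == (j.+1 %% n)%N :> nat) by rewrite eq_sym.
by case: (_ == _); rewrite ?mulr1 ?mulr0.
Qed.

Lemma Pmx_unit n (z : C) : z != 0 -> Pmx n z \in unitmx.
Proof. by move=> nz; rewrite PmxE unitmxZ ?unitfE // unitmx_tr unitmx_perm. Qed.

Lemma PmxA n (z : C) (A : 'M[C]_n) :
  Pmx n z *m A = z *: row_perm (sS n)^-1 A.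
Proof. by rewrite PmxE -scalemxAl tr_perm_mx row_permE. Qed.

Lemma chi_mod (H : zmodType) (t : H -> H) k (chi : H -> C) :
  is_character chi -> factors_through t k chi ->
  forall c h, chi (tpow t c h) = chi (tpow t (c %% k)%N h).
Proof.
move=> [chiD _] fchi c h.
have step : forall y, chi (tpow t k y) = chi y.
  move=> y; have e := fchi y.
  have -> : tpow t k y = (tpow t k y - y) + y by rewrite subrK.
  by rewrite chiD e mul1r.
rewrite {1}(divn_eq c k); elim: (c %/ k)%N => [|q IH]; first by rewrite mul0n add0n.
by rewrite mulSn -addnA /tpow iterD step.
Qed.

End Kron.
Arguments chi_mod {C H t k chi}.
Theorem proposition4 (C : numClosedFieldType) (H : zmodType) (t tinv : H -> H)
  (k1 k2 : nat) (chi1 chi2 : H -> C) (z1 z2 z : C) :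
  laurent_module t tinv ->
  (0 < k1)%N -> (0 < k2)%N -> coprime k1 k2 ->
  is_character chi1 -> is_character chi2 ->
  factors_through t k1 chi1 -> factors_through t k2 chi2 ->
  z1 ^+ k1 = (-1) ^+ k1.+1 -> z2 ^+ k2 = (-1) ^+ k2.+1 ->
  z ^+ (k1 * k2) = (-1) ^+ (k1 * k2).+1 ->
  rep_iso
    (fun g : int * H => kronmx (alpha t k1 chi1 z1 g) (alpha t k2 chi2 z2 g))
    (alpha t (k1 * k2) (fun h => chi1 h * chi2 h) z).
Proof.
move=> _ k1p k2p cop ch1 ch2 f1 f2 ez1 ez2 ez.
have sgn : forall m, (-1) ^+ m != 0 :> C by move=> m; rewrite signr_eq0.
have nz1 : z1 != 0 by move: (sgn k1.+1); rewrite -ez1 expf_eq0 k1p.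
have nz2 : z2 != 0 by move: (sgn k2.+1); rewrite -ez2 expf_eq0 k2p.
have np : (0 < k1 * k2)%N by rewrite muln_gt0 k1p k2p.
have nz : z != 0 by move: (sgn (k1 * k2).+1); rewrite -ez expf_eq0 np.
set w := z / (z1 * z2).
have nz12 : z1 * z2 != 0 by rewrite mulf_neq0.
have wz : w * (z1 * z2) = z by rewrite divfK.
have nw : w != 0 by rewrite mulf_neq0 // invr_eq0.
have wn : w ^+ (k1 * k2) = 1.
  have e : (z1 * z2) ^+ (k1 * k2) = z ^+ (k1 * k2).
    have e1 : z1 ^+ (k1 * k2) = ((-1) ^+ k1.+1) ^+ k2 by rewrite exprM ez1.
    have e2 : z2 ^+ (k1 * k2) = ((-1) ^+ k2.+1) ^+ k1 by rewrite mulnC exprM ez2.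
    rewrite ez exprMn e1 e2 -!exprM -exprD.
    rewrite -(@signr_odd C (_ + _)%N) -(@signr_odd C (k1 * k2).+1) oddD !oddM !oddS.
    have par : odd k1 || odd k2.
      case: (boolP (odd k1)) => //= o1; case: (boolP (odd k2)) => //= o2; move: cop; rewrite /coprime => /eqP g1.
      have : (2 %| gcdn k1 k2)%N by rewrite dvdn_gcd !dvdn2 o1 o2.
      by rewrite g1.
    by move: par; rewrite oddM; case: (odd k1); case: (odd k2).
  by rewrite /w exprMn exprVn e divff // expf_neq0.
pose r1 (c : 'I_(k1 * k2)) : 'I_k1 := Ordinal (ltn_pmod c k1p).
pose r2 (c : 'I_(k1 * k2)) : 'I_k2 := Ordinal (ltn_pmod c k2p).
pose sig (c : 'I_(k1 * k2)) : 'I_(k1 * k2) := gk (r1 c, r2 c).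
have sig_inj : injective sig.
  move=> c c' /(can_inj (@gkK _ _)) [] e1 e2.
  apply: val_inj => /=; move: (chinese_remainder cop c c').
  rewrite e1 e2 !eqxx /= => /eqP; rewrite !modn_small //.
pose sp := perm sig_inj.
pose wr := \row_(c < k1 * k2) w ^+ c.
pose A := diag_mx wr *m perm_mx sp.
have AE : forall c l, A c l = w ^+ c * (sig c == l)%:R.
  by move=> c l; rewrite /A mul_diag_mx /perm_mx !mxE permE.
have AM : forall (M : 'M[C]_(k1 * k2)) c l, (A *m M) c l = w ^+ c * M (sig c) l.
  by move=> M c l; rewrite /A -mulmxA -row_permE mul_diag_mx !mxE permE.
have Aunit : A \in unitmx.
  rewrite unitmx_mul unitmx_perm andbT unitmxE det_diag unitfE.
  by apply/prodf_neq0 => i _; rewrite mxE expf_neq0.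
clearbody A.
set P1 := Pmx k1 z1. set P2 := Pmx k2 z2. set P := Pmx (k1 * k2) z.
have E1 : forall h, A *m kronmx (diag_mx (\row_(i < k1) chi1 (tpow t i h)))
                              (diag_mx (\row_(i < k2) chi2 (tpow t i h)))
    = diag_mx (\row_(i < k1 * k2) (chi1 (tpow t i h) * chi2 (tpow t i h))) *m A.
  move=> h; rewrite kron_diag; apply/matrixP => c l.
  rewrite mul_mx_diag mul_diag_mx !mxE !AE.
  case: eqP => [<-|_]; last by rewrite !mulr0 mul0r.
  rewrite /sig gkK /= (chi_mod ch1 f1 c) (chi_mod ch2 f2 c).
  by rewrite mulrC.
have wval : forall c' : 'I_(k1 * k2),
    w ^+ (c'.+1 %% (k1 * k2))%N * (z1 * z2) = z * w ^+ c'.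
  move=> c'; case: (ltnP c'.+1 (k1 * k2)) => hlt.
    by rewrite modn_small // exprSr -mulrA wz mulrC.
  have e : c'.+1 = (k1 * k2)%N by apply/eqP; rewrite eqn_leq hlt ltn_ord.
  by rewrite e modnn expr0 mul1r -{1}wz mulrAC -exprS e wn mul1r.
have E2 : A *m kronmx P1 P2 = P *m A.
  apply/matrixP => c l; rewrite AM /P PmxA kronE gkK [in RHS]mxE [in RHS]mxE AE /=.
  have := permKV (sS (k1 * k2)) c; move: (((sS (k1 * k2))^-1)%g c) => c' hc'.
  have hc : (c : nat) = (c'.+1 %% (k1 * k2))%N by rewrite -hc' /sS permE.
  clear hc'.
  rewrite -(can_eq (@fkK k1 k2)) /sig gkK /P1 /P2 /Pmx !mxE.
  case: (fk l) => a b /=; rewrite xpair_eqE.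
  have key : forall k (kp : (0 < k)%N) (kd : (k %| k1 * k2)%N) (x : 'I_k),
      ((c %% k)%N == (x.+1 %% k)%N) = (Ordinal (ltn_pmod c' kp) == x).
    move=> k kp kd x; rewrite hc (modn_dvdm _ kd) -(addn1 c') -(addn1 x) eqn_modDr.
    by rewrite (modn_small (ltn_ord x)).
  rewrite /r1 /r2 (key _ k1p (dvdn_mulr _ (dvdnn _))) (key _ k2p (dvdn_mull _ (dvdnn _))).
  case: eqP => _; case: eqP => _ /=; try by rewrite ?mul0r ?mulr0 ?mul0r ?mulr0.
  by rewrite mulr1 hc wval.
have uP1 : P1 \in unitmx by exact: Pmx_unit.
have uP2 : P2 \in unitmx by exact: Pmx_unit.
have uP : P \in unitmx by exact: Pmx_unit.
have QX : kronmx P1 P2 *m kronmx (invmx P1) (invmx P2) = 1%:M.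
  by rewrite -kron_mul !mulmxV // kron1.
have E3 : A *m kronmx (invmx P1) (invmx P2) = invmx P *m A.
  have -> : invmx P *m A = invmx P *m A *m (kronmx P1 P2 *m kronmx (invmx P1) (invmx P2)).
    by rewrite QX mulmx1.
  by rewrite !mulmxA -(mulmxA (invmx P)) E2 mulmxA mulVmx // mul1mx.
exists A => //.
move=> [j h]; rewrite /alpha /= kron_mul mulmxA.
have -> : A *m kronmx (mxpowz P1 j) (mxpowz P2 j) = mxpowz P j *m A.
  by case: j => k; rewrite /mxpowz; (apply: etrans (congr1 (mulmx A) (kron_iter _ _ _ _ _ _)) _; apply: iter_inter) => //.
by rewrite -!mulmxA E1 mulmxA.
Qed.
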